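(* Let $G$ be a finite abelian group and let $f$ be an automorphism of the monoid $\mathcal{P}_{0}(G)$. If $H$ is a subgroup of $G$, then $f(H)$ is a subgroup of $G$ as well and $|f(H)|=|H|$.
   Context: For an additively written finite abelian group $G$, $\mathcal{P}_{0}(G)$ is the monoid of all subsets of $G$ containing $0$, with setwise addition $X+Y=\{x+y : x\in X, y\in Y\}$ and identity $\{0\}$. *)

(* Defs.v *)
From HB Require Import structures.
From mathcomp Require Import all_boot all_order all_algebra all_fingroup.
Set Implicit Arguments. Unset Strict Implicit. Unset Printing Implicit Defensive.
Import GRing.Theory.
Local Open Scope ring_scope.

Section P0.
Variable G : finZmodType.

Definition setadd (X Y : {set G}) : {set G} := [set x + y | x in X, y in Y].

Definition inP0 (X : {set G}) : bool := 0 \in X.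

(* f : {set G} -> {set G} restricts to an automorphism of the monoid
   (P_0(G), setadd, {0}); values of f outside P_0(G) are irrelevant. *)
Definition P0_automorphism (f : {set G} -> {set G}) : Prop :=
  [/\ (forall X, inP0 X -> inP0 (f X)),
      (forall X Y, inP0 X -> inP0 Y -> f X = f Y -> X = Y),
      (forall Y, inP0 Y -> exists2 X, inP0 X & f X = Y),
      f [set 0] = [set 0]
    & (forall X Y, inP0 X -> inP0 Y -> f (setadd X Y) = setadd (f X) (f Y))].
End P0.

(* Main.v *)
Require Import Defs.
From HB Require Import structures.
From mathcomp Require Import all_boot all_order all_algebra all_fingroup.

Set Implicit Arguments. Unset Strict Implicit. Unset Printing Implicit Defensive.
Import GRing.Theory.
Local Open Scope ring_scope.

Section Aux.
Variable G : finZmodType.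

Lemma setaddP (X Y : {set G}) z :
  reflect (exists x y, [/\ x \in X, y \in Y & z = x + y]) (z \in setadd X Y).
Proof.
apply: (iffP imset2P) => [[x y hx hy ->]|[x [y [hx hy ->]]]].
  by exists x, y.
by exists x y.
Qed.

Lemma stab_sub (K X : {set G}) : (0 : G) \in K -> setadd K K = K -> (0 : G) \in X ->
  (setadd X K == K) = (X \subset K).
Proof.
move=> K0 KK X0; apply/eqP/subsetP => [E x hx|sXK].
  by rewrite -E; apply/setaddP; exists x, 0; rewrite addr0.
apply/setP => z; apply/setaddP/idP => [[x [y [hx hy ->]]]|hz].
  by rewrite -KK; apply/setaddP; exists x, y; rewrite sXK.
by exists 0, z; rewrite add0r.
Qed.

Definition fam (K : {set G}) := [set X : {set G} | ((0 : G) \in X) && (setadd X K == K)].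

Lemma card_fam (K : {set G}) : (0 : G) \in K -> setadd K K = K ->
  #|fam K| = expn 2 #|K :\ (0 : G)|.
Proof.
move=> K0 KK.
have -> : fam K = (fun Y => (0 : G) |: Y) @: powerset (K :\ 0).
  apply/setP => X; rewrite inE; apply/andP/imsetP => [[X0 E]|[Y hY ->]].
    exists (X :\ 0); first by rewrite inE; apply/subsetP => x;
      rewrite !inE => /andP[-> hx] /=; move: E; rewrite stab_sub // => /subsetP; apply.
    by rewrite setD1K.
  rewrite setU11; split => //; rewrite stab_sub // ?setU11 //; rewrite subUset sub1set K0 /=.
  by move: hY; rewrite inE => /subset_trans; apply; apply: subsetDl.
rewrite card_in_imset ?card_powerset //.
move=> Y1 Y2; rewrite !inE => h1 h2 E.
have n1 : (0 : G) \notin Y1 by apply/negP => /(subsetP h1); rewrite !inE eqxx.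
have n2 : (0 : G) \notin Y2 by apply/negP => /(subsetP h2); rewrite !inE eqxx.
apply/setP => x; case: (x =P 0) => [->|/eqP nx]; first by rewrite (negbTE n1) (negbTE n2).
by move/setP: E => /(_ x); rewrite !inE (negbTE nx).
Qed.

End Aux.

Theorem lemma2p1 (G : finZmodType) (f : {set G} -> {set G})
  (hf : P0_automorphism f) (H : {group G}) :
  group_set (f H) /\ #|f H| = #|H|.
Proof.
case: hf => fP0 finj fsurj f0 fadd.
have H0 : (0 : G) \in (H : {set G}) := group1 H.
have HH : setadd H H = H.
  apply/setP => z; apply/setaddP/idP => [[x [y [hx hy ->]]]|hz].
    exact: (@groupM _ H x y hx hy).
  by exists 0, z; rewrite add0r.
have fH0 : (0 : G) \in f H := fP0 _ H0.
have fHH : setadd (f H) (f H) = f H by rewrite -fadd // HH.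
split.
  apply/andP; split; first exact: fH0.
  apply/subsetP => z /imset2P[x y hx hy ->].
  by rewrite -[in X in _ \in X]fHH; apply/setaddP; exists x, y.
have famE : fam (f H) = f @: fam H.
  apply/setP => Y; rewrite inE; apply/andP/imsetP => [[Y0 E]|[X hX ->]].
    have [X X0 fXY] := fsurj Y Y0; subst Y.
    exists X => //; rewrite inE; apply/andP; split; first exact: X0.
    apply/eqP; apply: (finj) => //.
      by rewrite /inP0; apply/setaddP; exists 0, 0; rewrite addr0.
    by rewrite fadd //; apply/eqP.
  move: hX; rewrite inE => /andP[X0 /eqP E]; split; first exact: fP0.
  by rewrite -fadd // E.
have : #|fam (f H)| = #|fam H|.
  rewrite famE card_in_imset // => X1 X2; rewrite !inE => /andP[h1 _] /andP[h2 _].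
  exact: (finj).
rewrite !card_fam // => /eqP; rewrite eqn_exp2l // => /eqP E.
by rewrite (cardsD1 0 (f H)) (cardsD1 0 (H : {set G})) fH0 H0 E.
Qed.
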